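(* Let $A$ be a real $m \times N$ matrix and let $\mathcal{N}(A)$ denote its null space. For a vector $\mathbf{w}$, let $k_{-,\mathbf{w}}$ and $k_{+,\mathbf{w}}$ denote the number of negative entries and the number of positive entries of $\mathbf{w}$, respectively. Let $k$ be a nonnegative integer. (i) If $$k < \min_{\mathbf{w} \in \mathcal{N}(A),\, \mathbf{w} \neq 0} \max\{k_{-,\mathbf{w}}, k_{+,\mathbf{w}}\},$$ then for every nonnegative vector $\mathbf{x}\in\mathbb{R}^N$ with at most $k$ nonzero entries, $\mathbf{x}$ is the unique sparsest nonnegative vector $\tilde{\mathbf{x}}$ satisfying $A\tilde{\mathbf{x}} = \mathbf{y}$, where $\mathbf{y}=A\mathbf{x}$. (ii) Conversely, if $$k \geq \min_{\mathbf{w} \in \mathcal{N}(A),\, \mathbf{w} \neq 0} \max\{k_{-,\mathbf{w}}, k_{+,\mathbf{w}}\},$$ then there exists a nonnegative vector $\mathbf{x}$ with at most $k$ nonzero entries which is not the unique sparsest nonnegative vector $\tilde{\mathbf{x}}$ satisfying $A\tilde{\mathbf{x}} = A\mathbf{x}$.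
   Context: A vector is called $k$-sparse if it has at most $k$ nonzero entries. ''Sparsest'' means having the fewest nonzero entries. *)

(* Defs.v *)
From mathcomp Require Import all_boot all_order all_algebra.
Set Implicit Arguments. Unset Strict Implicit. Unset Printing Implicit Defensive.
Import Order.TTheory GRing.Theory Num.Theory.
Local Open Scope ring_scope.

Definition kminus (R : realFieldType) (N : nat) (w : 'cV[R]_N) : nat :=
  #|[set i : 'I_N | w i 0 < 0]|.

Definition kplus (R : realFieldType) (N : nat) (w : 'cV[R]_N) : nat :=
  #|[set i : 'I_N | 0 < w i 0]|.

Definition sparsity (R : realFieldType) (N : nat) (x : 'cV[R]_N) : nat :=
  #|[set i : 'I_N | x i 0 != 0]|.

Definition nonneg (R : realFieldType) (N : nat) (x : 'cV[R]_N) : Prop :=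
  forall i, 0 <= x i 0.

Definition sparsest_nonneg (R : realFieldType) (m N : nat) (A : 'M[R]_(m, N))
  (y : 'cV[R]_m) (x : 'cV[R]_N) : Prop :=
  [/\ nonneg x, A *m x = y &
      forall z : 'cV[R]_N, nonneg z -> A *m z = y -> (sparsity x <= sparsity z)%N].

Definition unique_sparsest_nonneg (R : realFieldType) (m N : nat) (A : 'M[R]_(m, N))
  (y : 'cV[R]_m) (x : 'cV[R]_N) : Prop :=
  sparsest_nonneg A y x /\ forall z, sparsest_nonneg A y z -> z = x.

(* Main.v *)
Require Import Defs.
From mathcomp Require Import all_boot all_order all_algebra.
Import Order.TTheory GRing.Theory Num.Theory.
Local Open Scope ring_scope.
Set Implicit Arguments. Unset Strict Implicit.

Lemma kminus_le (R : realFieldType) (N : nat) (x z : 'cV[R]_N) :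
  nonneg z -> (kminus (z - x) <= sparsity x)%N.
Proof.
move=> nz; apply: subset_leq_card; apply/subsetP => i.
rewrite !inE !mxE; apply: contraTneq => ->.
by rewrite subr0 -leNgt nz.
Qed.

Lemma kplus_le (R : realFieldType) (N : nat) (x z : 'cV[R]_N) :
  nonneg x -> (kplus (z - x) <= sparsity z)%N.
Proof.
move=> nx; apply: subset_leq_card; apply/subsetP => i.
rewrite !inE !mxE; apply: contraTneq => ->.
by rewrite sub0r -leNgt oppr_le0 nx.
Qed.

Lemma key (R : realFieldType) (m N k : nat) (A : 'M[R]_(m, N)) :
  (forall w : 'cV[R]_N, A *m w = 0 -> w != 0 ->
      (k < maxn (kminus w) (kplus w))%N) ->
  forall x z : 'cV[R]_N, nonneg x -> nonneg z -> A *m z = A *m x ->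
  (sparsity x <= k)%N -> (sparsity z <= k)%N -> z = x.
Proof.
move=> H x z nx nz Ez sx sz; apply/eqP; rewrite -subr_eq0.
apply/negP => /negP nw.
have Aw : A *m (z - x) = 0 by rewrite mulmxBr Ez subrr.
have := H _ Aw nw; rewrite ltnNge geq_max.
by rewrite (leq_trans (@kminus_le _ _ x z nz) sx) (leq_trans (@kplus_le _ _ x z nx) sz).
Qed.

Definition posp (R : realFieldType) (N : nat) (w : 'cV[R]_N) : 'cV[R]_N :=
  \col_i Order.max (w i 0) 0.

Lemma posp_nonneg (R : realFieldType) (N : nat) (w : 'cV[R]_N) : nonneg (posp w).
Proof. by move=> i; rewrite mxE le_max lexx orbT. Qed.

Lemma posp_sparsity (R : realFieldType) (N : nat) (w : 'cV[R]_N) :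
  sparsity (posp w) = kplus w.
Proof.
apply: eq_card => i; rewrite !inE mxE.
case: (ltP 0 (w i 0)) => h.
  by rewrite gt_eqF.
by rewrite eqxx.
Qed.

Lemma posp_sub (R : realFieldType) (N : nat) (w : 'cV[R]_N) :
  posp w - posp (- w) = w.
Proof.
apply/matrixP => i j; rewrite !mxE (ord1 j).
case: (leP (w i 0) 0) => h.
  by rewrite (@max_l _ _ (- w i 0) 0) ?oppr_ge0 // opprK add0r.
by rewrite (@max_r _ _ (- w i 0) 0) ?subr0 // oppr_le0 ltW.
Qed.

Lemma kminusN (R : realFieldType) (N : nat) (w : 'cV[R]_N) :
  kminus (- w) = kplus w.
Proof. by apply: eq_card => i; rewrite !inE mxE oppr_lt0. Qed.

Lemma kplusN (R : realFieldType) (N : nat) (w : 'cV[R]_N) :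
  kplus (- w) = kminus w.
Proof. by apply: eq_card => i; rewrite !inE mxE oppr_gt0. Qed.

Theorem theorem1 (R : realFieldType) (m N k : nat) (A : 'M[R]_(m, N)) :
  ((forall w : 'cV[R]_N, A *m w = 0 -> w != 0 ->
      (k < maxn (kminus w) (kplus w))%N) ->
   forall x : 'cV[R]_N, nonneg x -> (sparsity x <= k)%N ->
     unique_sparsest_nonneg A (A *m x) x)
  /\
  ((exists w : 'cV[R]_N, [/\ A *m w = 0, w != 0 &
      (maxn (kminus w) (kplus w) <= k)%N]) ->
   exists x : 'cV[R]_N, [/\ nonneg x, (sparsity x <= k)%N &
     ~ unique_sparsest_nonneg A (A *m x) x]).
Proof.
split.
  move=> H x nx sx.
  have sp : sparsest_nonneg A (A *m x) x.
    split=> // z nz Ez; rewrite leqNgt; apply/negP => lt.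
    have := key H nx nz Ez sx (ltnW (leq_trans lt sx)).
    by move=> e; move: lt; rewrite e ltnn.
  split=> // z [nz Ez /(_ x nx erefl) le].
  exact: (key H nx nz Ez sx (leq_trans le sx)).
case=> w0 [Aw0 nw0 mk].
have [w [Aw nw mw le]] : exists w : 'cV[R]_N, [/\ A *m w = 0, w != 0,
    (maxn (kminus w) (kplus w) <= k)%N & (kminus w <= kplus w)%N].
  case: (leqP (kminus w0) (kplus w0)) => h; first by exists w0.
  exists (- w0); rewrite kminusN kplusN mulmxN Aw0 oppr0 oppr_eq0 maxnC.
  by split=> //; apply: ltnW.
exists (posp w); split; first exact: posp_nonneg.
  by rewrite posp_sparsity (leq_trans (leq_maxr _ _) mw).
have EA : A *m posp (- w) = A *m posp w.
  apply/eqP; rewrite eq_sym -subr_eq0 -mulmxBr posp_sub Aw //.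
move=> [[_ _ sp] uniq].
have hz : sparsest_nonneg A (A *m posp w) (posp (- w)).
  split=> //; first exact: posp_nonneg.
  move=> z nz Ez; apply: leq_trans (sp z nz Ez).
  by rewrite !posp_sparsity kplusN.
have e := uniq _ hz.
by move: nw; rewrite -(posp_sub w) e subrr eqxx.
Qed.
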